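(* For every cake $C$ and every family $S$ of usable pieces, $$\mathrm{PropEF}(C,2,S)\ \ge\ \mathrm{Prop}(C,2,S)\cdot\inf_{s\in S}\mathrm{PropEF}(s,2,S).$$
   Context: A cake is a Borel subset of $\mathbb{R}^d$; $S$ is a family of Borel subsets of $\mathbb{R}^d$. For a cake $D$ (here $D=C$ or $D=s\in S$), a value measure on $D$ is $V(X)=\int_X v$ with $v$ non-negative, bounded, integrable on $D$, $V(D)<\infty$; $V^S(X):=\sup\{V(s'):s'\in S,s'\subseteq X\}$. For $n$ agents with value measures $V_1,\dots,V_n$ on $D$, an $S$-allocation of $D$ is $(X_1,\dots,X_n)$ with $X_i\in S$ pairwise disjoint and $\bigcup_i X_i\subseteq D$; it is envy-free if $V_i^S(X_i)\ge V_i^S(X_j)$ for all $i,j$. $\mathrm{PropEF}(D,n,S):=\inf_{V_1,\dots,V_n}\sup_X\min_i V_i(X_i)/V_i(D)$, infimum over all $n$-tuples of value measures on $D$ and supremum over envy-free $S$-allocations of $D$; $\mathrm{Prop}(D,n,S)$ is defined identically with the supremum over all $S$-allocations of $D$. *)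

(* Defs.v *)
From Stdlib Require Import Reals List Classical ClassicalEpsilon.
From Stdlib Require Fin.
Open Scope R_scope.

Definition Rd (d : nat) := Fin.t d -> R.
Definition rset (d : nat) := Rd d -> Prop.

Definition sup_with (dflt : R) (E : R -> Prop) : R :=
  match excluded_middle_informative (bound E /\ exists x, E x) with
  | left H => proj1_sig (completeness E (proj1 H) (proj2 H))
  | right _ => dflt
  end.
Definition inf_with (dflt : R) (E : R -> Prop) : R :=
  - sup_with (- dflt) (fun x => E (- x)).

Definition is_open {d} (U : rset d) : Prop :=
  forall x, U x -> exists eps, 0 < eps /\
    forall y : Rd d, (forall i, Rabs (y i - x i) < eps) -> U y.

Inductive Borel {d} : rset d -> Prop :=
| Borel_open U : is_open U -> Borel U
| Borel_compl A : Borel A -> Borel (fun x => ~ A x)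
| Borel_cunion (F : nat -> rset d) : (forall n, Borel (F n)) ->
    Borel (fun x => exists n, F n x)
| Borel_ext A B : Borel A -> (forall x, A x <-> B x) -> Borel B.

(* Lebesgue (outer) measure via countable covers by closed boxes. *)
Fixpoint fin_prod (d : nat) : (Fin.t d -> R) -> R :=
  match d with
  | O => fun _ => 1
  | S k => fun f => f Fin.F1 * fin_prod k (fun i => f (Fin.FS i))
  end.
Definition box_vol {d} (a b : Rd d) : R := fin_prod d (fun i => b i - a i).

Definition cover_sum {d} (A : rset d) (r : R) : Prop :=
  exists a b : nat -> Rd d,
    (forall n i, a n i <= b n i) /\
    (forall x, A x -> exists n, forall i, a n i <= x i <= b n i) /\
    infinite_sum (fun n => box_vol (a n) (b n)) r.

Definition lfinite {d} (A : rset d) : Prop := exists r, cover_sum A r.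
Definition lmeas {d} (A : rset d) : R := inf_with 0 (cover_sum A).

(* Lebesgue integral of a nonnegative function over X: sup of integrals of
   nonnegative simple functions below v on X. *)
Definition disj {d} (p q : R * rset d) : Prop :=
  forall x, snd p x -> snd q x -> False.

Definition simple_sum {d} (v : Rd d -> R) (X : rset d) (r : R) : Prop :=
  exists l : list (R * rset d),
    (forall p, In p l ->
       0 <= fst p /\ Borel (snd p) /\ lfinite (snd p) /\
       (forall x, snd p x -> X x /\ fst p <= v x)) /\
    ForallOrdPairs disj l /\
    r = fold_right (fun p acc => fst p * lmeas (snd p) + acc) 0 l.

Definition lint {d} (v : Rd d -> R) (X : rset d) : R := sup_with 0 (simple_sum v X).

(* v is the density of a value measure on the cake D: nonnegative, bounded,
   measurable, integrable on D (V(D) < oo); we also require V(D) > 0 so that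
   the normalised values V(X)/V(D) make sense. *)
Definition value_density {d} (D : rset d) (v : Rd d -> R) : Prop :=
  (forall x, D x -> 0 <= v x) /\
  (exists M, forall x, D x -> v x <= M) /\
  (forall t, Borel (fun x => D x /\ t < v x)) /\
  bound (simple_sum v D) /\
  0 < lint v D.

Definition VS {d} (S : rset d -> Prop) (v : Rd d -> R) (X : rset d) : R :=
  sup_with 0 (fun r => exists s', S s' /\ (forall x, s' x -> X x) /\ r = lint v s').

Definition is_S_alloc {d} (n : nat) (S : rset d -> Prop) (D : rset d)
  (X : nat -> rset d) : Prop :=
  (forall i, (i < n)%nat -> S (X i)) /\
  (forall i j, (i < n)%nat -> (j < n)%nat -> i <> j ->
     forall x, X i x -> X j x -> False) /\
  (forall i x, (i < n)%nat -> X i x -> D x).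

Definition envy_free {d} (n : nat) (S : rset d -> Prop)
  (v : nat -> Rd d -> R) (X : nat -> rset d) : Prop :=
  forall i j, (i < n)%nat -> (j < n)%nat -> VS S (v i) (X j) <= VS S (v i) (X i).

Fixpoint min_upto (f : nat -> R) (n : nat) : R :=
  match n with
  | O => 1
  | S O => f O
  | S m => Rmin (min_upto f m) (f m)
  end.

Definition min_ratio {d} (n : nat) (D : rset d) (v : nat -> Rd d -> R)
  (X : nat -> rset d) : R :=
  min_upto (fun i => lint (v i) (X i) / lint (v i) D) n.

Definition PropEF {d} (D : rset d) (n : nat) (S : rset d -> Prop) : R :=
  inf_with 1 (fun r => exists v : nat -> Rd d -> R,
    (forall i, (i < n)%nat -> value_density D (v i)) /\
    r = sup_with 0 (fun q => exists X, is_S_alloc n S D X /\ envy_free n S v X /\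
                                   q = min_ratio n D v X)).

Definition PropA {d} (D : rset d) (n : nat) (S : rset d -> Prop) : R :=
  inf_with 1 (fun r => exists v : nat -> Rd d -> R,
    (forall i, (i < n)%nat -> value_density D (v i)) /\
    r = sup_with 0 (fun q => exists X, is_S_alloc n S D X /\
                                   q = min_ratio n D v X)).

(* Main.v *)
Require Import Defs.
From Stdlib Require Import Reals Lra Lia Classical ClassicalEpsilon List.
Open Scope R_scope.

Lemma sup_lub (dflt : R) (E : R -> Prop) :
  bound E -> (exists x, E x) -> is_lub E (sup_with dflt E).
Proof.
  intros Hb Hn. unfold sup_with.
  destruct (excluded_middle_informative _) as [H|H].
  - destruct (completeness E (proj1 H) (proj2 H)) as [m Hm]; exact Hm.
  - exfalso; apply H; split; auto.
Qed.

Lemma sup_dflt (dflt : R) (E : R -> Prop) :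
  ~ (bound E /\ exists x, E x) -> sup_with dflt E = dflt.
Proof.
  intros Hn. unfold sup_with.
  destruct (excluded_middle_informative _) as [H|H]; [contradiction|reflexivity].
Qed.

Lemma sup_ge_el (dflt : R) (E : R -> Prop) x :
  bound E -> E x -> x <= sup_with dflt E.
Proof.
  intros Hb Hx. destruct (sup_lub dflt E Hb (ex_intro _ x Hx)) as [H1 _]. apply H1; auto.
Qed.

Lemma sup_le_ub (dflt : R) (E : R -> Prop) M :
  (forall x, E x -> x <= M) -> (exists x, E x) -> sup_with dflt E <= M.
Proof.
  intros HM Hn. assert (Hb : bound E) by (exists M; intros y Hy; apply HM; auto).
  destruct (sup_lub dflt E Hb Hn) as [_ H2]. apply H2. intros y Hy; apply HM; auto.
Qed.

Lemma sup_approx0 (E : R -> Prop) y :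
  sup_with 0 E >= y -> 0 < y -> forall e, 0 < e -> exists x, E x /\ y - e < x.
Proof.
  intros Hs Hy e He.
  destruct (classic (bound E /\ exists x, E x)) as [[Hb Hn]|Hn].
  - apply NNPP; intros Hno.
    destruct (sup_lub 0 E Hb Hn) as [_ H2].
    assert (sup_with 0 E <= y - e).
    { apply H2. intros z Hz. apply Rnot_lt_le. intros Hlt. apply Hno. exists z; auto. }
    lra.
  - rewrite sup_dflt in Hs by auto. lra.
Qed.

Lemma sup01 (E : R -> Prop) :
  (forall x, E x -> 0 <= x <= 1) -> 0 <= sup_with 0 E <= 1.
Proof.
  intros H.
  destruct (classic (exists x, E x)) as [[x Hx]|Hn].
  - assert (Hb : bound E) by (exists 1; intros y Hy; apply H; auto).
    split.
    + apply Rle_trans with x; [apply H; auto| apply sup_ge_el; auto].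
    + apply sup_le_ub; [intros y Hy; apply H; auto | exists x; auto].
  - rewrite sup_dflt. lra. intros [_ Hx]; auto.
Qed.

Lemma inf_le_el (dflt : R) (E : R -> Prop) x :
  (exists m, forall y, E y -> m <= y) -> E x -> inf_with dflt E <= x.
Proof.
  intros [m Hm] Hx. unfold inf_with.
  assert (x' : (fun z => E (- z)) (- x)) by (simpl; rewrite Ropp_involutive; auto).
  assert (Hb : bound (fun z => E (- z))).
  { exists (- m). intros z Hz. apply Hm in Hz. lra. }
  pose proof (sup_ge_el (- dflt) _ (- x) Hb x'). lra.
Qed.

Lemma inf_ge_lb (dflt : R) (E : R -> Prop) m :
  (forall x, E x -> m <= x) -> m <= dflt -> m <= inf_with dflt E.
Proof.
  intros Hm Hd. unfold inf_with.
  destruct (classic (exists x, E x)) as [[x Hx]|Hn].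
  - assert (sup_with (- dflt) (fun z => E (- z)) <= - m).
    { apply sup_le_ub. intros z Hz. apply Hm in Hz. lra.
      exists (- x). rewrite Ropp_involutive; auto. }
    lra.
  - rewrite sup_dflt. lra. intros [_ [z Hz]]. apply Hn. eauto.
Qed.

Lemma inf01 (E : R -> Prop) :
  (forall x, E x -> 0 <= x <= 1) -> 0 <= inf_with 1 E <= 1.
Proof.
  intros H. split.
  - apply inf_ge_lb; [intros x Hx; apply H; auto | lra].
  - destruct (classic (exists x, E x)) as [[x Hx]|Hn].
    + apply Rle_trans with x; [apply inf_le_el; [exists 0; intros y Hy; apply H; auto|auto]|apply H; auto].
    + unfold inf_with. rewrite sup_dflt. lra. intros [_ [z Hz]]. apply Hn. eauto.
Qed.

Section M.
Context {dim : nat}.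

Lemma simple_sum_nil (v : Rd dim -> R) X : simple_sum v X 0.
Proof.
  exists nil. split; [intros p Hp; destruct Hp|]. split; [constructor|reflexivity].
Qed.

Lemma simple_sum_mono (v : Rd dim -> R) (X Y : rset dim) r :
  (forall x, X x -> Y x) -> simple_sum v X r -> simple_sum v Y r.
Proof.
  intros HXY [l [H1 [H2 H3]]]. exists l. split; [|split; auto].
  intros p Hp. destruct (H1 p Hp) as [A [B [Cc D]]]. repeat split; auto.
  - apply HXY, (D x H).
  - apply (D x H).
Qed.

Lemma bound_sub (v : Rd dim -> R) (X Y : rset dim) :
  (forall x, X x -> Y x) -> bound (simple_sum v Y) -> bound (simple_sum v X).
Proof.
  intros HXY [M HM]. exists M. intros r Hr. apply HM. eapply simple_sum_mono; eauto.
Qed.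

Lemma lint_nonneg (v : Rd dim -> R) X : bound (simple_sum v X) -> 0 <= lint v X.
Proof. intros Hb. unfold lint. apply sup_ge_el; auto. apply simple_sum_nil. Qed.

Lemma lint_mono (v : Rd dim -> R) (X Y : rset dim) :
  (forall x, X x -> Y x) -> bound (simple_sum v Y) -> lint v X <= lint v Y.
Proof.
  intros HXY Hb. unfold lint at 1. apply sup_le_ub.
  - intros r Hr. unfold lint. apply sup_ge_el; auto. eapply simple_sum_mono; eauto.
  - exists 0. apply simple_sum_nil.
Qed.

Lemma VS_eq (S : rset dim -> Prop) (v : Rd dim -> R) X :
  S X -> bound (simple_sum v X) -> VS S v X = lint v X.
Proof.
  intros HSX Hb. apply Rle_antisym.
  - unfold VS. apply sup_le_ub.
    + intros r [s' [_ [Hs' ->]]]. apply lint_mono; auto.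
    + exists (lint v X). exists X. repeat split; auto.
  - unfold VS. apply sup_ge_el.
    + exists (lint v X). intros r [s' [_ [Hs' ->]]]. apply lint_mono; auto.
    + exists X. repeat split; auto.
Qed.

Lemma Borel_inter (A B : rset dim) : Borel A -> Borel B -> Borel (fun x => A x /\ B x).
Proof.
  intros HA HB.
  set (F := fun n : nat => match n with O => (fun x => ~ A x) | _ => (fun x => ~ B x) end).
  assert (HF : forall n, Borel (F n)).
  { intros [|n]; simpl; apply Borel_compl; auto. }
  apply Borel_ext with (fun x => ~ (exists n, F n x)).
  - apply Borel_compl. apply Borel_cunion. auto.
  - intros x. split.
    + intros H. split; apply NNPP; intros Hn; apply H.
      * exists O; simpl; auto.
      * exists 1%nat; simpl; auto.
    + intros [Ha Hb] [[|n] Hn]; simpl in Hn; auto.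
Qed.

Lemma density_restrict (C s : rset dim) v :
  value_density C v -> (forall x, s x -> C x) -> Borel s -> 0 < lint v s ->
  value_density s v.
Proof.
  intros [H1 [[M HM] [H3 [H4 H5]]]] Hsub Hs Hpos.
  split; [intros x Hx; apply H1; auto|].
  split; [exists M; intros x Hx; apply HM; auto|].
  split; [|split; [eapply bound_sub; eauto| auto]].
  intros t. apply Borel_ext with (fun x => s x /\ (C x /\ t < v x)).
  - apply Borel_inter; auto.
  - intros x; split; [intros [A [_ B]]; auto | intros [A B]; repeat split; auto].
Qed.

Lemma ratio01 (D Y : rset dim) w :
  value_density D w -> (forall x, Y x -> D x) -> 0 <= lint w Y / lint w D <= 1.
Proof.
  intros [_ [_ [_ [Hb Hp]]]] HY.
  pose proof (lint_nonneg w Y (bound_sub w Y D HY Hb)).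
  pose proof (lint_mono w Y D HY Hb).
  split.
  - unfold Rdiv; apply Rmult_le_pos; [lra| apply Rlt_le, Rinv_0_lt_compat; lra].
  - apply Rmult_le_reg_r with (lint w D); auto. field_simplify; lra.
Qed.

Lemma min_ratio2 (D : rset dim) v X :
  min_ratio 2 D v X = Rmin (lint (v O) (X O) / lint (v O) D) (lint (v 1%nat) (X 1%nat) / lint (v 1%nat) D).
Proof. reflexivity. Qed.

Lemma min_ratio01 (S : rset dim -> Prop) (D : rset dim) v X :
  (forall i, (i < 2)%nat -> value_density D (v i)) -> is_S_alloc 2 S D X ->
  0 <= min_ratio 2 D v X <= 1.
Proof.
  intros Hv [_ [_ Hsub]]. rewrite min_ratio2.
  pose proof (ratio01 D (X O) (v O) (Hv O ltac:(lia)) (fun x => Hsub O x ltac:(lia))).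
  pose proof (ratio01 D (X 1%nat) (v 1%nat) (Hv 1%nat ltac:(lia)) (fun x => Hsub 1%nat x ltac:(lia))).
  unfold Rmin; destruct Rle_dec; lra.
Qed.

End M.

Lemma PropEF01 {d} (D : rset d) (S : rset d -> Prop) : 0 <= PropEF D 2 S <= 1.
Proof.
  unfold PropEF. apply inf01. intros x [v [Hv ->]]. apply sup01.
  intros y [X [Ha [_ ->]]]. eapply min_ratio01; eauto.
Qed.

Lemma PropA01 {d} (D : rset d) (S : rset d -> Prop) : 0 <= PropA D 2 S <= 1.
Proof.
  unfold PropA. apply inf01. intros x [v [Hv ->]]. apply sup01.
  intros y [X [Ha ->]]. eapply min_ratio01; eauto.
Qed.

Lemma Q01 {d} (S : rset d -> Prop) :
  0 <= inf_with 1 (fun r => exists s, S s /\ r = PropEF s 2 S) <= 1.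
Proof. apply inf01. intros x [s [_ ->]]. apply PropEF01. Qed.

Lemma ratio_pos {d} (D Y : rset d) w a :
  value_density D w -> 0 < a -> a <= lint w Y / lint w D -> 0 < lint w Y.
Proof.
  intros [_ [_ [_ [_ Hp]]]] Ha Hr.
  assert (lint w Y = (lint w Y / lint w D) * lint w D) by (field; lra).
  rewrite H. apply Rmult_lt_0_compat; lra.
Qed.

Lemma sub_case {d} (C : rset d) (S : rset d -> Prop) (HS : forall s, S s -> Borel s)
  v (Hv : forall i, (i < 2)%nat -> value_density C (v i)) s (Hs : S s)
  (Hsub : forall x, s x -> C x) a (Ha : 0 < a)
  (Hr : forall i, (i < 2)%nat -> a <= lint (v i) s / lint (v i) C) eps (He : 0 < eps)
  (HeQ : eps < inf_with 1 (fun r => exists s, S s /\ r = PropEF s 2 S)) :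
  exists Z, is_S_alloc 2 S C Z /\ envy_free 2 S v Z /\
    a * (inf_with 1 (fun r => exists s, S s /\ r = PropEF s 2 S) - eps) <= min_ratio 2 C v Z.
Proof.
  set (Q := inf_with 1 (fun r => exists s, S s /\ r = PropEF s 2 S)) in *.
  assert (Hvs : forall i, (i < 2)%nat -> value_density s (v i)).
  { intros i Hi. apply density_restrict with C; auto.
    apply (ratio_pos C s (v i) a); auto. }
  assert (H1 : Q <= PropEF s 2 S).
  { apply inf_le_el. exists 0. intros y [s' [_ ->]]. apply PropEF01. exists s; split; auto. }
  assert (H2 : PropEF s 2 S <= sup_with 0 (fun q => exists X, is_S_alloc 2 S s X /\
      envy_free 2 S v X /\ q = min_ratio 2 s v X)).
  { unfold PropEF. apply inf_le_el.
    - exists 0. intros y [w [Hw ->]]. apply sup01. intros z [X [HX [_ ->]]].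
      eapply min_ratio01; eauto.
    - exists v; split; auto. }
  destruct (sup_approx0 (fun q => exists X, is_S_alloc 2 S s X /\
      envy_free 2 S v X /\ q = min_ratio 2 s v X) Q ltac:(lra) ltac:(lra) eps He) as [x [[Z [HZ [HEF ->]]] Hlt]].
  exists Z. destruct HZ as [ZS [Zd Zsub]].
  split; [split; [auto|split; [auto| intros i x Hi Hx; apply Hsub; eapply Zsub; eauto]]|].
  split; auto.
  rewrite min_ratio2 in Hlt. rewrite min_ratio2.
  assert (Hq0 : Q - eps < lint (v O) (Z O) / lint (v O) s).
  { eapply Rlt_le_trans; [exact Hlt| apply Rmin_l]. }
  assert (Hq1 : Q - eps < lint (v 1%nat) (Z 1%nat) / lint (v 1%nat) s).
  { eapply Rlt_le_trans; [exact Hlt| apply Rmin_r]. }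
  assert (Hgen : forall i, (i < 2)%nat -> Q - eps < lint (v i) (Z i) / lint (v i) s ->
     a * (Q - eps) <= lint (v i) (Z i) / lint (v i) C).
  { intros i Hi Hq.
    destruct (Hvs i Hi) as [_ [_ [_ [_ Hps]]]].
    destruct (Hv i Hi) as [_ [_ [_ [_ HpC]]]].
    assert (E : lint (v i) (Z i) / lint (v i) C =
      (lint (v i) (Z i) / lint (v i) s) * (lint (v i) s / lint (v i) C)) by (field; lra).
    rewrite E. rewrite Rmult_comm. apply Rmult_le_compat; try lra. apply Hr; auto. }
  apply Rmin_glb; apply Hgen; auto.
Qed.

Lemma core {d} (C : rset d) (S : rset d -> Prop) (HS : forall s, S s -> Borel s)
  v (Hv : forall i, (i < 2)%nat -> value_density C (v i)) eps (He : 0 < eps)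
  (HeP : eps < PropA C 2 S)
  (HeQ : eps < inf_with 1 (fun r => exists s, S s /\ r = PropEF s 2 S)) :
  (PropA C 2 S - eps) * (inf_with 1 (fun r => exists s, S s /\ r = PropEF s 2 S) - eps)
  <= sup_with 0 (fun q => exists X, is_S_alloc 2 S C X /\ envy_free 2 S v X /\ q = min_ratio 2 C v X).
Proof.
  set (Q := inf_with 1 (fun r => exists s, S s /\ r = PropEF s 2 S)) in *.
  set (P := PropA C 2 S) in *.
  pose proof (Q01 S) as HQ. fold Q in HQ.
  set (E := fun q => exists X, is_S_alloc 2 S C X /\ envy_free 2 S v X /\ q = min_ratio 2 C v X).
  assert (Hbd : bound E).
  { exists 1. intros y [X [HX [_ ->]]]. eapply min_ratio01; eauto. }
  cut (exists X, is_S_alloc 2 S C X /\ envy_free 2 S v X /\ (P - eps) * (Q - eps) <= min_ratio 2 C v X).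
  { intros [X [H1 [H2 H3]]]. eapply Rle_trans; [exact H3|]. apply sup_ge_el; auto.
    exists X; auto. }
  assert (H1 : P <= sup_with 0 (fun q => exists X, is_S_alloc 2 S C X /\ q = min_ratio 2 C v X)).
  { unfold P, PropA. apply inf_le_el.
    - exists 0. intros y [w [Hw ->]]. apply sup01. intros z [X [HX ->]].
      eapply min_ratio01; eauto.
    - exists v; split; auto. }
  destruct (sup_approx0 (fun q => exists X, is_S_alloc 2 S C X /\ q = min_ratio 2 C v X)
     P ltac:(lra) ltac:(lra) eps He) as [x [[X [HX ->]] Hlt]].
  rewrite min_ratio2 in Hlt.
  assert (r0 : P - eps < lint (v O) (X O) / lint (v O) C).
  { eapply Rlt_le_trans; [exact Hlt| apply Rmin_l]. }
  assert (r1 : P - eps < lint (v 1%nat) (X 1%nat) / lint (v 1%nat) C).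
  { eapply Rlt_le_trans; [exact Hlt| apply Rmin_r]. }
  pose proof HX as [XS [Xd Xsub]].
  assert (Hb : forall i, (i < 2)%nat -> bound (simple_sum (v i) C)).
  { intros i Hi. destruct (Hv i Hi) as [_ [_ [_ [Hb _]]]]. auto. }
  assert (HVC : forall i, (i < 2)%nat -> 0 < lint (v i) C).
  { intros i Hi. destruct (Hv i Hi) as [_ [_ [_ [_ Hp]]]]. auto. }
  assert (HVS : forall i j, (i < 2)%nat -> (j < 2)%nat -> VS S (v i) (X j) = lint (v i) (X j)).
  { intros i j Hi Hj. apply VS_eq; auto. eapply bound_sub; [|apply Hb; auto].
    intros x Hx; eapply Xsub; eauto. }
  assert (Hdiv : forall i, (i < 2)%nat -> forall a b, a <= b -> a / lint (v i) C <= b / lint (v i) C).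
  { intros i Hi a b Hab. unfold Rdiv. apply Rmult_le_compat_r; auto.
    apply Rlt_le, Rinv_0_lt_compat; auto. }
  destruct (Rle_lt_dec (lint (v O) (X 1%nat)) (lint (v O) (X O))) as [A0|A0];
  destruct (Rle_lt_dec (lint (v 1%nat) (X O)) (lint (v 1%nat) (X 1%nat))) as [A1|A1].
  - exists X. split; auto. split.
    + intros i j Hi Hj. destruct i as [|[|i]]; destruct j as [|[|j]]; try lia;
      rewrite !HVS by lia; lra.
    + rewrite min_ratio2. apply Rmin_glb.
      * assert ((P - eps) * (Q - eps) <= P - eps) by nra. lra.
      * assert ((P - eps) * (Q - eps) <= P - eps) by nra. lra.
  - (* agent 1 envies X0 : s = X 0 *)
    destruct (sub_case C S HS v Hv (X O) (XS O ltac:(lia)) (fun x Hx => Xsub O x ltac:(lia) Hx)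
       (P - eps) ltac:(lra)) with (eps := eps) as [Z HZ]; auto.
    + intros i Hi. destruct i as [|[|i]]; try lia.
      * lra.
      * apply Rle_trans with (lint (v 1%nat) (X 1%nat) / lint (v 1%nat) C); [lra|].
        apply Hdiv; auto; lra.
    + exists Z. exact HZ.
  - (* agent 0 envies X1 : s = X 1 *)
    destruct (sub_case C S HS v Hv (X 1%nat) (XS 1%nat ltac:(lia)) (fun x Hx => Xsub 1%nat x ltac:(lia) Hx)
       (P - eps) ltac:(lra)) with (eps := eps) as [Z HZ]; auto.
    + intros i Hi. destruct i as [|[|i]]; try lia.
      * apply Rle_trans with (lint (v O) (X O) / lint (v O) C); [lra|].
        apply Hdiv; auto; lra.
      * lra.
    + exists Z. exact HZ.
  - (* both envy: swap *)
    set (Y := fun i : nat => match i with O => X 1%nat | _ => X O end).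
    exists Y. split; [|split].
    + split; [intros [|[|i]] Hi; simpl; try lia; auto|split].
      * intros [|[|i]] [|[|j]] Hi Hj Hij; try lia; simpl; intros x H H'.
        -- eapply Xd with (i := 1%nat) (j := O); eauto.
        -- eapply Xd with (i := O) (j := 1%nat); eauto.
      * intros [|[|i]] x Hi Hx; try lia; simpl in Hx; first [apply (Xsub 1%nat x); [lia|exact Hx] | apply (Xsub O x); [lia|exact Hx]].
    + intros i j Hi Hj. destruct i as [|[|i]]; destruct j as [|[|j]]; try lia; simpl;
      rewrite !HVS by lia; lra.
    + rewrite min_ratio2. simpl. apply Rmin_glb.
      * assert ((P - eps) * (Q - eps) <= P - eps) by nra.
        assert (lint (v O) (X O) / lint (v O) C <= lint (v O) (X 1%nat) / lint (v O) C)
          by (apply Hdiv; auto; lra). lra.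
      * assert ((P - eps) * (Q - eps) <= P - eps) by nra.
        assert (lint (v 1%nat) (X 1%nat) / lint (v 1%nat) C <= lint (v 1%nat) (X O) / lint (v 1%nat) C)
          by (apply Hdiv; auto; lra). lra.
Qed.

Theorem mainTheorem9 (d : nat) (C : rset d) (S : rset d -> Prop)
  (HC : Borel C) (HS : forall s, S s -> Borel s) :
  PropEF C 2 S >= PropA C 2 S * inf_with 1 (fun r => exists s, S s /\ r = PropEF s 2 S).
Proof.
  pose proof (Q01 S) as HQ. pose proof (PropA01 C S) as HP.
  set (Q := inf_with 1 (fun r => exists s, S s /\ r = PropEF s 2 S)) in *.
  set (P := PropA C 2 S) in *.
  apply Rle_ge. unfold PropEF. apply inf_ge_lb; [|nra].
  intros r [v [Hv ->]].
  assert (Hr : 0 <= sup_with 0 (fun q => exists X, is_S_alloc 2 S C X /\ envy_free 2 S v X /\ q = min_ratio 2 C v X) <= 1).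
  { apply sup01. intros y [X [HX [_ ->]]]. eapply min_ratio01; eauto. }
  destruct (classic (0 < P /\ 0 < Q)) as [[HP0 HQ0]|Hn].
  - apply Rnot_lt_le. intros Hlt.
    set (r := sup_with 0 _) in *.
    set (e := P * Q - r).
    assert (He : 0 < e) by (unfold e; lra).
    set (eps := Rmin (Rmin (P/2) (Q/2)) (e/(P+Q))).
    assert (E1 : eps <= P/2) by (unfold eps; eapply Rle_trans; [apply Rmin_l|apply Rmin_l]).
    assert (E2 : eps <= Q/2) by (unfold eps; eapply Rle_trans; [apply Rmin_l|apply Rmin_r]).
    assert (E3 : eps <= e/(P+Q)) by (unfold eps; apply Rmin_r).
    assert (E0 : 0 < eps).
    { unfold eps. apply Rmin_glb_lt; [apply Rmin_glb_lt; lra|].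
      unfold Rdiv; apply Rmult_lt_0_compat; [lra| apply Rinv_0_lt_compat; lra]. }
    assert (E4 : eps * (P + Q) <= e).
    { replace e with (e / (P+Q) * (P+Q)) by (field; lra).
      apply Rmult_le_compat_r; lra. }
    pose proof (core C S HS v Hv eps E0 ltac:(fold P; lra) ltac:(fold Q; lra)) as Hc.
    fold P Q r in Hc.
    unfold e in E4. nra.
  - assert (P * Q <= 0).
    { apply Rnot_lt_le. intros H. apply Hn. split.
      - destruct (Rle_lt_dec P 0); [|auto]. nra.
      - destruct (Rle_lt_dec Q 0); [|auto]. nra. }
    lra.
Qed.
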